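(* Let $f\in\mathcal{H}$ be strongly non-polynomial with $f(t)\gg t^\delta$ for some $\delta>0$. Then: (i) the class $S(f,k)$ is non-empty for all sufficiently large $k$; (ii) for every $0<c<1$ sufficiently close to $1$, there exists $k_0\in\mathbb{N}$ such that the function $t\mapsto t^c$ belongs to $S(f,k_0)$; (iii) the class $S(f,k)$ does not contain all functions $t\mapsto t^c$ with $c$ sufficiently close to $1$ (i.e. there is no $c_0<1$ such that $t^c\in S(f,k)$ for all $c\in(c_0,1)$).
   Context: $\mathcal{H}$ is a fixed Hardy field (subfield of germs at $+\infty$ of real functions, closed under differentiation) containing the logarithmico-exponential functions, closed under composition and compositional inversion. $f$ is strongly non-polynomial if $t^d\prec f(t)\prec t^{d+1}$ for some integer $d\ge0$, where $f\prec g$ means $f/g\to0$; $f\gg g$ means $|g(t)|\le C|f(t)|$ eventually. For $k$ large enough that $f^{(k)}(t)\to0$, $S(f,k)=\{g\in\mathcal{H}:\ |f^{(k)}(t)|^{-1/k}\preceq g(t)\prec|f^{(k+1)}(t)|^{-1/(k+1)}\}$, where $u\preceq v$ means $\lim_{t\to\infty}|v(t)/u(t)|$ is non-zero (possibly infinite). *)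

(* Defs.v *)
(* R : realType, functions R -> R viewed as germs at +oo. *)
From HB Require Import structures.
From mathcomp Require Import all_boot all_order all_algebra.
From mathcomp Require Import all_classical all_reals all_analysis.
Set Implicit Arguments. Unset Strict Implicit. Unset Printing Implicit Defensive.
Import Order.TTheory GRing.Theory Num.Theory.
Import numFieldNormedType.Exports.
Local Open Scope classical_set_scope.
Local Open Scope ring_scope.

Section Hardy.
Variable R : realType.

Definition eventeq (f g : R -> R) : Prop := \forall t \near +oo, f t = g t.

(* A Hardy field: a set of functions, stable under eventual equality (so it is
   really a set of germs at +oo), forming a subfield of the ring of germs, whose
   elements are eventually differentiable with derivative again in the set. *)
Record hardy_field (H : set (R -> R)) : Prop := {
  hf_germ : forall f g, H f -> eventeq f g -> H g;
  hf_one : H (fun=> 1);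
  hf_add : forall f g, H f -> H g -> H (fun t => f t + g t);
  hf_opp : forall f, H f -> H (fun t => - f t);
  hf_mul : forall f g, H f -> H g -> H (fun t => f t * g t);
  hf_inv : forall f, H f -> ~ eventeq f (fun=> 0) ->
             exists2 g, H g & eventeq (fun t => f t * g t) (fun=> 1);
  hf_diff : forall f, H f ->
             (\forall t \near +oo, derivable f t 1) /\ H (derive1 f)
}.

(* Logarithmico-exponential (Hardy L-) functions: syntax *)
Inductive LEterm : Type :=
  | LE_cst of R
  | LE_id
  | LE_add of LEterm & LEterm
  | LE_opp of LEterm
  | LE_mul of LEterm & LEterm
  | LE_inv of LEterm
  | LE_exp of LEterm
  | LE_ln of LEterm.

Fixpoint LE_eval (e : LEterm) : R -> R :=
  match e with
  | LE_cst c => fun=> c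
  | LE_id => id
  | LE_add a b => fun t => LE_eval a t + LE_eval b t
  | LE_opp a => fun t => - LE_eval a t
  | LE_mul a b => fun t => LE_eval a t * LE_eval b t
  | LE_inv a => fun t => (LE_eval a t)^-1
  | LE_exp a => fun t => expR (LE_eval a t)
  | LE_ln a => fun t => ln (LE_eval a t)
  end.

Fixpoint LE_wd (e : LEterm) : Prop :=
  match e with
  | LE_cst _ | LE_id => True
  | LE_add a b | LE_mul a b => LE_wd a /\ LE_wd b
  | LE_opp a | LE_exp a => LE_wd a
  | LE_inv a => LE_wd a /\ \forall t \near +oo, LE_eval a t != 0
  | LE_ln a => LE_wd a /\ \forall t \near +oo, 0 < LE_eval a t
  end.

Definition contains_LE (H : set (R -> R)) : Prop :=
  forall e, LE_wd e -> H (LE_eval e).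

Definition hardy_closed_comp (H : set (R -> R)) : Prop :=
  forall f g, H f -> H g -> g x @[x --> +oo] --> +oo -> H (f \o g).

Definition hardy_closed_inv (H : set (R -> R)) : Prop :=
  forall f, H f -> f x @[x --> +oo] --> +oo ->
    exists g, [/\ H g, g x @[x --> +oo] --> +oo,
                  eventeq (f \o g) id & eventeq (g \o f) id].

Definition lt_growth (f g : R -> R) : Prop := (f x / g x) @[x --> +oo] --> 0.

Definition le_growth (u v : R -> R) : Prop :=
  exists l : \bar R, (l != 0)%E /\
    ((`|v x / u x|)%:E @[x --> +oo] --> l).

Definition dominates (f g : R -> R) : Prop :=
  exists C : R, \forall t \near +oo, `|g t| <= C * `|f t|.

Definition strongly_nonpoly (f : R -> R) : Prop :=
  exists d : nat, lt_growth (fun t => t ^+ d) f /\ lt_growth f (fun t => t ^+ d.+1).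

Definition S_class (H : set (R -> R)) (f : R -> R) (k : nat) : set (R -> R) :=
  [set g | H g /\
     le_growth (fun t => `|derive1n k f t| `^ (- (k%:R)^-1)) g /\
     lt_growth g (fun t => `|derive1n k.+1 f t| `^ (- (k.+1%:R)^-1))].

End Hardy.

(* Main.v *)
Require Import Defs.
From HB Require Import structures.
From mathcomp Require Import all_boot all_order all_algebra.
From mathcomp Require Import all_classical all_reals all_analysis.
From mathcomp Require Import ring lra.
Set Implicit Arguments. Unset Strict Implicit. Unset Printing Implicit Defensive.
Import Order.TTheory GRing.Theory Num.Theory.
Import numFieldNormedType.Exports.
Local Open Scope classical_set_scope.
Local Open Scope ring_scope.


Section P1.
Variable R : realType.
Implicit Types (g h : R -> R).

Definition ev (P : R -> Prop) := exists T : R, forall t, T <= t -> P t.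

Lemma evP (P : R -> Prop) : (\forall t \near +oo, P t) <-> ev P.
Proof.
split.
- case=> M [Mr HM]; exists (M + 1) => t Ht; apply: HM.
  by apply: (lt_le_trans _ Ht); rewrite ltrDl.
- case=> T HT; exists T; split; first exact: num_real.
  by move=> t Ht; apply: HT; exact: ltW.
Qed.

Lemma ev_and (P Q : R -> Prop) : ev P -> ev Q -> ev (fun t => P t /\ Q t).
Proof.
case=> T1 H1 [T2 H2]; exists (Num.max T1 T2) => t Ht.
by split; [apply: H1 | apply: H2]; apply: le_trans Ht; rewrite ?le_max lexx ?orbT.
Qed.

Lemma ev_impl (P Q : R -> Prop) : ev P -> (forall t, P t -> Q t) -> ev Q.
Proof. by case=> T HT PQ; exists T => t /HT /PQ. Qed.

Lemma ev_ge (a : R) : ev (fun t => a <= t).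
Proof. by exists a. Qed.

Lemma ev_ex (P : R -> Prop) : ev P -> exists t, P t.
Proof. by case=> T HT; exists T; apply: HT. Qed.

Lemma cvgE g r : g x @[x --> +oo] --> r <->
  forall eps, 0 < eps -> ev (fun t => `|g t - r| <= eps).
Proof.
rewrite cvgrPdist_le; split.
- move=> H eps e0; have /evP [T HT] := H eps e0.
  by exists T => t /HT; rewrite distrC.
- move=> H eps e0; apply/evP; have [T HT] := H eps e0.
  by exists T => t /HT; rewrite distrC.
Qed.

Lemma cvgyE g : g x @[x --> +oo] --> +oo <-> forall A, ev (fun t => A <= g t).
Proof.
rewrite cvgryPge; split.
- by move=> H A; apply/evP; exact: H.
- by move=> H A; apply/evP; exact: H.
Qed.

Lemma itv_oo_l (x y z : R) : z \in `]x, y[ -> x < z.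
Proof. by rewrite in_itv /= => /andP[]. Qed.

Lemma itv_cc_l (x y z : R) : z \in `[x, y] -> x <= z.
Proof. by rewrite in_itv /= => /andP[]. Qed.

Lemma itv_cc_r (x y z : R) : z \in `[x, y] -> z <= y.
Proof. by rewrite in_itv /= => /andP[]. Qed.

Lemma cmp g (dg : R -> R) h (dh : R -> R) (T : R) :
  (forall t, T <= t -> is_derive t 1 g (dg t)) ->
  (forall t, T <= t -> is_derive t 1 h (dh t)) ->
  (forall t, T <= t -> dg t <= dh t) ->
  forall x y, T <= x -> x <= y -> g y - g x <= h y - h x.
Proof.
move=> Dg Dh le x y Tx; rewrite le_eqVlt => /predU1P[->|xy].
  by rewrite !subrr.
have DD : forall z, T <= z -> is_derive z 1 (h - g) (dh z - dg z).
  move=> z Tz; have := Dh z Tz; have := Dg z Tz => G1 G2.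
  exact: is_deriveB.
have Cc : {within `[x, y], continuous (h - g)}.
  apply: derivable_within_continuous => z zin.
  have : T <= z by apply: (le_trans Tx); exact: (itv_cc_l zin).
  by move/DD/(@ex_derive _ _ _ _ _ _).
have [c cin E] := @MVT R (h - g) (fun z => dh z - dg z) x y xy
  (fun z zin => DD z (le_trans Tx (ltW (itv_oo_l zin)))) Cc.
rewrite -subr_ge0.
have -> : h y - h x - (g y - g x) = (h - g) y - (h - g) x.
  have E2 : forall z, (h - g) z = h z - g z by [].
  by rewrite !E2; ring.
rewrite E mulr_ge0 // ?subr_ge0 ?le // ?(ltW xy) //.
exact: (le_trans Tx (ltW (itv_oo_l cin))).
Qed.

End P1.

Section P2.
Variable R : realType.
Implicit Types (g h : R -> R).

Lemma is_derive_cpow (c b t : R) : 0 < t -> b != 0 ->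
  is_derive t 1 (fun s => c / b * s `^ b) (c * t `^ (b - 1)).
Proof.
move=> t0 b0.
have D := is_deriveZ (c / b) (is_derive1_powR b t0).
apply: is_derive_eq D _.
by rewrite -[_ *: _]/(_ * _) mulrA divfK.
Qed.

Lemma int_pow g (dg : R -> R) (b c T : R) : 0 < T -> b != 0 ->
  (forall t, T <= t -> is_derive t 1 g (dg t)) ->
  (forall t, T <= t -> `|dg t| <= c * t `^ (b - 1)) ->
  forall x y, T <= x -> x <= y -> `|g y - g x| <= c / b * (y `^ b - x `^ b).
Proof.
move=> T0 b0 Dg Bd x y Tx xy.
have Dh : forall t, T <= t ->
    is_derive t 1 (fun s => c / b * s `^ b) (c * t `^ (b - 1)).
  move=> t Tt; apply: is_derive_cpow => //; exact: lt_le_trans T0 Tt.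
have E1 := cmp Dg Dh (fun t Tt => le_trans (ler_norm _) (Bd t Tt)) Tx xy.
have DgN : forall t, T <= t -> is_derive t 1 (- g) (- dg t).
  move=> t Tt; exact: (is_deriveN (Dg t Tt)).
have BN : forall t, T <= t -> - dg t <= c * t `^ (b - 1).
  by move=> t Tt; apply: le_trans (ler_norm _) _; rewrite normrN; exact: Bd.
have E2 := cmp DgN Dh BN Tx xy.
have NE : forall z, (- g) z = - g z by [].
rewrite !NE in E2.
rewrite ler_norml mulrBr; apply/andP; split; lra.
Qed.

Lemma sign_const g (T : R) : (forall t, T <= t -> derivable g t 1) ->
  (forall t, T <= t -> g t != 0) ->
  (forall t, T <= t -> 0 < g t) \/ (forall t, T <= t -> g t < 0).
Proof.
move=> Dg Ng.
have IV : forall t, T <= t -> g T * g t < 0 -> False.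
  move=> t Tt neg.
  have Cc : {within `[T, t], continuous g}.
    apply: derivable_within_continuous => z zin; apply: Dg; exact: itv_cc_l zin.
  have MM : Num.min (g T) (g t) <= 0 <= Num.max (g T) (g t).
    rewrite ge_min le_max.
    case: (ltgtP (g T) 0) neg => gT.
    - by rewrite nmulr_rlt0 // => gt; rewrite (ltW gt).
    - by rewrite pmulr_rlt0 // => gt; rewrite (ltW gt).
    - by [].
  have [c cin gc] := @IVT R g T t 0 Tt Cc MM.
  by have := Ng c (itv_cc_l cin); rewrite gc eqxx.
case: (ltgtP (g T) 0) => gT.
- right=> t Tt; rewrite ltNge; apply/negP => gt.
  have gt' : 0 < g t by rewrite lt_def Ng.
  by apply: (IV t Tt); rewrite nmulr_rlt0.
- left=> t Tt; rewrite ltNge; apply/negP => gt.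
  have gt' : g t < 0 by rewrite lt_def eq_sym Ng.
  by apply: (IV t Tt); rewrite pmulr_rlt0.
- by have := Ng T (lexx T); rewrite gT eqxx.
Qed.

Lemma mono_lim g (T : R) : (forall x y, T <= x -> x <= y -> g x <= g y) ->
  (exists r : R, g x @[x --> +oo] --> r) \/ (forall A, ev (fun t => A <= g t)).
Proof.
move=> M.
case: (pselect (exists B, forall t, T <= t -> g t <= B)) => [[B HB]|NB].
- left; pose G := fun x => g (Num.max x T).
  have GM : nondecreasing_fun G.
    move=> x y xy; apply: M; first by rewrite le_max lexx orbT.
    by rewrite ge_max !le_max xy lexx /= !orbT.
  have GB : has_ubound (range G).
    by exists B => _ [x _ <-]; apply: HB; rewrite le_max lexx orbT.
  have := nondecreasing_cvgr GM GB; set r := sup _ => Gr.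
  exists r; apply/cvgE => eps e0; have HT' := (cvgE G r).1 Gr.
  have [T2 H2] := HT' eps e0.
  exists (Num.max T2 T) => t Tt.
  have tT2 : T2 <= t by apply: le_trans Tt; rewrite le_max lexx.
  have tT : T <= t by apply: le_trans Tt; rewrite le_max lexx orbT.
  have := H2 t tT2; rewrite /G.
  by have -> : Num.max t T = t by apply/max_idPl.
- right=> A.
  have [t0 [Tt0 gt0]] : exists t0, T <= t0 /\ A < g t0.
    apply: contra_notP NB => H; exists A => t Tt; rewrite leNgt; apply/negP => At.
    by apply: H; exists t.
  exists t0 => t t0t; apply: (le_trans (ltW gt0)); exact: M.
Qed.

End P2.

Section P3.
Variable R : realType.

Lemma powR_unb (a A : R) : 0 < a -> ev (fun t => A <= t `^ a).
Proof.
move=> a0; set M := Num.max A 1.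
have M0 : 0 <= M by rewrite le_max ler01 orbT.
exists (M `^ (a^-1)) => t Tt.
apply: (@le_trans _ _ M); first by rewrite le_max lexx.
have E : (M `^ (a^-1)) `^ a = M by rewrite -powRrM mulVf ?gt_eqF // powRr1.
rewrite -{1}E; apply: (ge0_ler_powR (ltW a0)) => //; rewrite ?nnegrE ?powR_ge0 //.
exact: le_trans (powR_ge0 _ _) Tt.
Qed.

Lemma powR_small (a eps : R) : a < 0 -> 0 < eps -> ev (fun t => t `^ a <= eps).
Proof.
move=> a0 e0; have na : 0 < - a by rewrite oppr_gt0.
have [T HT] := @powR_unb (- a) (eps^-1) na.
exists (Num.max T 1) => t Tt.
have t0 : 0 < t by apply: lt_le_trans Tt; rewrite lt_max ltr01 orbT.
have X : eps^-1 <= t `^ (- a) by apply: HT; apply: le_trans Tt; rewrite le_max lexx.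
rewrite -[a]opprK powRN -[eps]invrK lef_pV2 ?posrE ?invr_gt0 ?powR_gt0 //.
Qed.

Lemma powR_mono (x y a : R) : 0 <= x -> x <= y -> 0 <= a -> x `^ a <= y `^ a.
Proof.
move=> x0 xy a0; apply: (ge0_ler_powR a0) => //; rewrite nnegrE //.
exact: le_trans xy.
Qed.

Lemma powR_anti (x y a : R) : 0 < x -> x <= y -> a <= 0 -> y `^ a <= x `^ a.
Proof.
move=> x0 xy a0.
have y0 : 0 < y by apply: lt_le_trans xy.
have E : forall z, z `^ a = (z `^ (- a))^-1 by move=> z; rewrite -powRN opprK.
rewrite !E lef_pV2 ?posrE ?powR_gt0 //.
apply: powR_mono => //; [exact: ltW | by rewrite oppr_ge0].
Qed.

Lemma powR_inv_base (x r : R) : 0 < x -> (x^-1) `^ r = (x `^ r)^-1.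
Proof.
by move=> x0; rewrite /powR invr_eq0 gt_eqF // lnV ?posrE // mulrN expRN.
Qed.

Lemma powR_exp (x r : R) : 0 < x -> x `^ r = expR (r * ln x).
Proof. by move=> x0; rewrite /powR gt_eqF. Qed.

End P3.

Section P4.
Variable R : realType.
Variable H : set (R -> R).
Hypothesis hH : hardy_field H.
Hypothesis hLE : contains_LE H.

Lemma Hgerm g g' : H g -> ev (fun t => g t = g' t) -> H g'.
Proof. by move=> Hg E; apply: (hf_germ hH Hg); apply/evP. Qed.

Lemma Hcst (c : R) : H (fun=> c).
Proof. exact: (hLE (e := LE_cst c)). Qed.

Lemma Hid : H (fun t => t).
Proof. exact: (hLE (e := LE_id R)). Qed.

Lemma Hadd g h : H g -> H h -> H (fun t => g t + h t).
Proof. exact: hf_add. Qed.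

Lemma Hmul g h : H g -> H h -> H (fun t => g t * h t).
Proof. exact: hf_mul. Qed.

Lemma Hopp g : H g -> H (fun t => - g t).
Proof. exact: hf_opp. Qed.

Lemma Hinv g : H g -> ev (fun t => g t != 0) -> H (fun t => (g t)^-1).
Proof.
move=> Hg Nz.
have NE : ~ eventeq g (fun=> 0).
  move=> /evP E; have [t [Et Nt]] := ev_ex (ev_and E Nz).
  by move: Nt; rewrite Et eqxx.
have [g2 Hg2 /evP E2] := hf_inv hH Hg NE.
apply: (Hgerm Hg2); have [T HT] := ev_and E2 Nz; exists T => t /HT [/= Et Nt].
by apply: (mulfI Nt); rewrite Et mulfV.
Qed.

Lemma Hdiv g h : H g -> H h -> ev (fun t => h t != 0) -> H (fun t => g t / h t).
Proof. by move=> Hg Hh Nz; apply: Hmul => //; exact: Hinv. Qed.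

Lemma Hpow (a : R) : H (fun t => t `^ a).
Proof.
have wd : LE_wd (LE_exp (LE_mul (LE_cst a) (LE_ln (LE_id R)))).
  split => //; split => //; apply/evP; exists 1 => t t1; exact: lt_le_trans ltr01 t1.
apply: (Hgerm (hLE wd)); exists 1 => t t1 /=.
by rewrite powR_exp //; exact: lt_le_trans ltr01 t1.
Qed.

Lemma Hder g : H g -> H (derive1 g).
Proof. by move=> Hg; case: (hf_diff hH Hg). Qed.

Lemma Hderiv g : H g -> ev (fun t => is_derive t 1 g (derive1 g t)).
Proof.
move=> Hg; case: (hf_diff hH Hg) => /evP D _.
have [T HT] := D; exists T => t /HT Dt; rewrite derive1E; exact: derivableP.
Qed.

Lemma Hdern g k : H g -> H (derive1n k g).
Proof. by move=> Hg; elim: k => [|k IH] //=; exact: Hder. Qed.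

Lemma Hsign g : H g ->
  ev (fun t => g t = 0) \/ ev (fun t => 0 < g t) \/ ev (fun t => g t < 0).
Proof.
move=> Hg; case: (pselect (ev (fun t => g t = 0))) => [E|NE]; first by left.
right.
have NE' : ~ eventeq g (fun=> 0) by move=> /evP.
have [g2 _ /evP E2] := hf_inv hH Hg NE'.
case: (hf_diff hH Hg) => /evP D _.
have [T HT] := ev_and E2 D.
have Nz : forall t, T <= t -> g t != 0.
  move=> t /HT [Et _]; apply/eqP => g0; move: Et; rewrite g0 mul0r => /eqP.
  by rewrite eq_sym oner_eq0.
have [P|N] := sign_const (fun t Tt => (HT t Tt).2) Nz.
- by left; exists T.
- by right; exists T.
Qed.

Lemma ndec_of_der g (dg : R -> R) (T : R) :
  (forall t, T <= t -> is_derive t 1 g (dg t)) -> (forall t, T <= t -> 0 <= dg t) ->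
  forall x y, T <= x -> x <= y -> g x <= g y.
Proof.
move=> Dg P x y Tx xy.
have Dc : forall t, T <= t -> is_derive t 1 (cst (0 : R)) 0.
  by move=> t _; exact: is_derive_cst.
have := cmp Dc Dg P Tx xy; rewrite /= subrr subr_ge0 //.
Qed.

Lemma Hlim g : H g ->
  (exists r : R, g x @[x --> +oo] --> r) \/
  (forall A, ev (fun t => A <= g t)) \/ (forall A, ev (fun t => g t <= A)).
Proof.
move=> Hg; have HD := Hderiv Hg.
have [Z|[P|N]] := Hsign (Hder Hg).
- have [T HT] := ev_and HD Z.
  have Pz : forall t, T <= t -> 0 <= derive1 g t by move=> t Tt; rewrite (HT t Tt).2.
  have M := ndec_of_der (fun t Tt => (HT t Tt).1) Pz.
  by case: (mono_lim M) => [L|U]; [left|right; left].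
- have [T HT] := ev_and HD P.
  have M := ndec_of_der (fun t Tt => (HT t Tt).1) (fun t Tt => ltW (HT t Tt).2).
  by case: (mono_lim M) => [L|U]; [left|right; left].
- have [T HT] := ev_and HD N.
  have NE : forall z, (- g) z = - g z by [].
  have Pz : forall t, T <= t -> 0 <= - derive1 g t.
    by move=> t Tt; rewrite oppr_ge0; exact: ltW (HT t Tt).2.
  have M := @ndec_of_der (- g) (fun t => - derive1 g t) T
     (fun t Tt => is_deriveN (HT t Tt).1) Pz.
  case: (mono_lim M) => [[r L]|U].
  + left; exists (- r); apply/cvgE => eps e0.
    have [T2 H2] := (cvgE _ _).1 L eps e0; exists T2 => t /H2.
    by rewrite NE -normrN opprD opprK.
  + right; right => A; have [T2 H2] := U (- A); exists T2 => t /H2.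
    by rewrite NE lerN2.
Qed.

End P4.

Section P5.
Variable R : realType.
Variable H : set (R -> R).
Hypothesis hH : hardy_field H.
Hypothesis hLE : contains_LE H.

Definition small (q : R -> R) := forall eps, 0 < eps -> ev (fun t => `|q t| <= eps).

Lemma smallE (q : R -> R) : small q <-> q x @[x --> +oo] --> 0.
Proof.
rewrite cvgE; split => S eps e0; have [T HT] := S eps e0; exists T => t /HT;
  by rewrite subr0.
Qed.

Lemma ev_pos : ev (fun t : R => 0 < t).
Proof. by exists 1 => t; apply: lt_le_trans ltr01. Qed.

Lemma ev_powR_neq0 (a : R) : ev (fun t : R => t `^ a != 0).
Proof. by have [T HT] := ev_pos; exists T => t /HT t0; rewrite gt_eqF // powR_gt0. Qed.

Lemma Hdich q : H q -> small q \/
  exists m, 0 < m /\ (ev (fun t => m <= q t) \/ ev (fun t => q t <= - m)).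
Proof.
move=> Hq; have [[r L]|[P|N]] := Hlim hH Hq.
- have S := (cvgE _ _).1 L.
  case: (ltgtP r 0) => r0.
  + have nr : 0 < - r / 2 by rewrite divr_gt0 // oppr_gt0.
    right; exists (- r / 2); split => //.
    right; have [T HT] := S (- r / 2) nr.
    exists T => t /HT; rewrite ler_norml => /andP[_ ?]; lra.
  + have nr : 0 < r / 2 by rewrite divr_gt0.
    right; exists (r / 2); split => //.
    left; have [T HT] := S (r / 2) nr.
    exists T => t /HT; rewrite ler_norml => /andP[? _]; lra.
  + left => eps e0; have [T HT] := S eps e0; exists T => t /HT.
    by rewrite r0 subr0.
- by right; exists 1; split => //; left; exact: P.
- by right; exists 1; split => //; right; exact: N.
Qed.

Lemma Habs g : H g -> H (fun t => `|g t|).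
Proof.
move=> Hg; have [Z|[P|N]] := Hsign hH Hg.
- apply: (Hgerm hH Hg); have [T HT] := Z; exists T => t /HT ->.
  by rewrite normr0.
- apply: (Hgerm hH Hg); have [T HT] := P; exists T => t /HT t0.
  by rewrite gtr0_norm.
- apply: (Hgerm hH (Hopp hH Hg)); have [T HT] := N; exists T => t /HT t0.
  by rewrite ltr0_norm.
Qed.

Lemma G2core g (dg : R -> R) (b m : R) : 0 < b -> 0 < m ->
  ev (fun t => is_derive t 1 g (dg t)) -> ev (fun t => m * t `^ (b - 1) <= dg t) ->
  small (fun t => g t / t `^ b) -> False.
Proof.
move=> b0 m0 D L S.
have [T HT] := ev_and (ev_and D L) (ev_ge 1).
have T1 : 1 <= T := (HT T (lexx T)).2.
have T0 : 0 < T by apply: lt_le_trans T1.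
set mb := m / b; have mb0 : 0 < mb by apply: divr_gt0.
have Dh : forall t, T <= t -> is_derive t 1 (fun s => mb * s `^ b) (m * t `^ (b - 1)).
  move=> t Tt; apply: is_derive_cpow; first exact: lt_le_trans Tt.
  by rewrite gt_eqF.
have C := cmp Dh (fun t Tt => (HT t Tt).1.1) (fun t Tt => (HT t Tt).1.2).
set K := g T - mb * T `^ b.
have q4 : 0 < mb / 4 by rewrite divr_gt0.
have [y [[Sy Uy] Ty]] := ev_ex (ev_and (ev_and (S (mb / 4) q4)
   (powR_unb (4 * `|K| / mb) b0)) (ev_ge T)).
have y0 : 0 < y by apply: lt_le_trans Ty.
have Y0 : 0 < y `^ b by apply: powR_gt0.
have Cy := C T y (lexx T) Ty.
have E1 : g y <= mb * y `^ b / 4.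
  move: Sy => /ler_normlP [_]; rewrite ler_pdivrMr //.
  by rewrite mulrAC.
have E2 : 4 * `|K| <= mb * y `^ b.
  by move: Uy; rewrite ler_pdivrMr // [_ * mb]mulrC.
have E3 : - K <= `|K| by rewrite -normrN ler_norm.
have Z0 : 0 < mb * y `^ b by apply: mulr_gt0.
rewrite /K in E2 E3.
lra.
Qed.

Lemma G2 g (b : R) : 0 < b -> H g -> small (fun t => g t / t `^ b) ->
  small (fun t => derive1 g t / t `^ (b - 1)).
Proof.
move=> b0 Hg S.
have Hq : H (fun t => derive1 g t / t `^ (b - 1)).
  exact: (Hdiv hH (Hder hH Hg) (Hpow hH hLE _) (ev_powR_neq0 _)).
case: (Hdich Hq) => // [[m [m0 [L|L]]]]; exfalso.
- apply: (G2core b0 m0 (Hderiv hH Hg) _ S).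
  have [T HT] := ev_and L ev_pos; exists T => t /HT [Lt t0].
  by move: Lt; rewrite ler_pdivlMr // powR_gt0.
- have DN : ev (fun t => is_derive t 1 (- g) (- derive1 g t)).
    by have [T HT] := Hderiv hH Hg; exists T => t /HT Dt; exact: is_deriveN.
  apply: (G2core b0 m0 DN).
  + have [T HT] := ev_and L ev_pos; exists T => t /HT [Lt t0].
    move: Lt; rewrite ler_pdivrMr ?powR_gt0 // => Lt.
    by rewrite lerNr -mulNr.
  + move=> eps e0; have [T HT] := S eps e0; exists T => t /HT.
    by rewrite /= mulNr normrN.
Qed.

End P5.

Section P6.
Variable R : realType.
Variable H : set (R -> R).
Hypothesis hH : hardy_field H.
Hypothesis hLE : contains_LE H.
Variable f : R -> R.
Hypothesis hf : H f.
Variable d : nat.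
Hypothesis hd1 : lt_growth (fun t => t ^+ d) f.
Hypothesis hd2 : lt_growth f (fun t => t ^+ d.+1).
Variable delta : R.
Hypothesis hdel0 : 0 < delta.
Hypothesis hdel : dominates f (fun t => t `^ delta).
Hypothesis hcomp : hardy_closed_comp H.

Local Notation F k := (derive1n k f).

Lemma HF k : H (F k).
Proof. exact: Hdern. Qed.

Lemma DF k : ev (fun t => is_derive t 1 (F k) (F k.+1 t)).
Proof. exact: (Hderiv hH (HF k)). Qed.

Lemma small_eq (q p : R -> R) : small q -> ev (fun t => q t = p t) -> small p.
Proof.
move=> S [T HT] eps e0; have [T2 H2] := S eps e0.
have [T3 H3] := ev_and (ex_intro _ T HT) (ex_intro _ T2 H2).
by exists T3 => t /H3 [<-].
Qed.

Lemma small_le (q p : R -> R) : small q -> ev (fun t => `|p t| <= `|q t|) -> small p.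
Proof.
move=> S [T HT] eps e0; have [T2 H2] := S eps e0.
have [T3 H3] := ev_and (ex_intro _ T HT) (ex_intro _ T2 H2).
by exists T3 => t /H3 [A B]; apply: le_trans A B.
Qed.

Lemma natR1 (n : nat) : (n.+1%:R : R) - 1 = n%:R.
Proof. by rewrite -natr1 addrK. Qed.

Lemma Fj_small j : (j <= d.+1)%N -> small (fun t => F j t / t `^ ((d.+1 - j)%:R)).
Proof.
elim: j => [_|j IH jd].
- apply: (small_eq (q := fun t => f t / t ^+ d.+1)); first exact/smallE.
  exists 0 => t t0; rewrite subn0 powR_mulrn //.
- have jd' : (j <= d.+1)%N by apply: ltnW.
  have b0 : (0 : R) < (d.+1 - j)%:R by rewrite ltr0n subn_gt0.
  have := G2 hH hLE b0 (HF j) (IH jd').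
  have -> : ((d.+1 - j)%:R : R) - 1 = (d.+1 - j.+1)%:R.
    have np : (0 < d.+1 - j)%N by rewrite subn_gt0.
    by rewrite subnS -[in LHS](prednK np) natR1.
  by [].
Qed.

Lemma Fk_small_aux i : small (F (d.+1 + i)).
Proof.
elim: i => [|i IH].
- apply: (small_eq (Fj_small (leqnn _))); exists 0 => t _.
  by rewrite addn0 subnn powRr0 divr1.
- have S1 : small (fun t => F (d.+1 + i) t / t `^ 1).
    apply: (small_le IH); exists 1 => t t1.
    have t0 : 0 < t by apply: lt_le_trans t1.
    rewrite (powRr1 (ltW t0)) normrM; apply: ler_piMr => //; rewrite normfV gtr0_norm //.
    by rewrite invf_le1.
  have := G2 hH hLE ltr01 (HF _) S1.
  rewrite subrr; move=> S2; apply: (small_eq S2); exists 0 => t _.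
  by rewrite powRr0 divr1 addnS.
Qed.

Lemma Fk_small k : (d.+1 <= k)%N -> small (F k).
Proof. by move=> dk; rewrite -(subnKC dk); exact: Fk_small_aux. Qed.

Lemma chain j : forall i B, ev (fun t => `|F (i + j) t| <= B) ->
  exists M, ev (fun t => `|F i t| <= M * t `^ (j%:R)).
Proof.
elim: j => [|j IH] i B Hb.
- exists B; have [T HT] := Hb; exists T => t /HT.
  by rewrite addn0 powRr0 mulr1.
- have Hb' : ev (fun t => `|F (i.+1 + j) t| <= B) by rewrite addSnnS.
  have [M HM] := IH i.+1 B Hb'.
  have [T HT] := ev_and (ev_and HM (DF i)) (ev_ge 1).
  have T1 : 1 <= T := (HT T (lexx T)).2.
  have T0 : 0 < T by apply: lt_le_trans T1.
  have b0 : (j.+1%:R : R) != 0 by rewrite pnatr_eq0.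
  have Bd : forall t, T <= t -> `|F i.+1 t| <= M * t `^ (j.+1%:R - 1).
    by move=> t Tt; rewrite natR1; exact: (HT t Tt).1.1.
  have IP := @int_pow R (F i) (F i.+1) j.+1%:R M T T0 b0
     (fun t Tt => (HT t Tt).1.2) Bd.
  exists (`|F i T| + `|M / j.+1%:R|); exists T => t Tt.
  have t1 : 1 <= t := (HT t Tt).2.
  have t0 : 0 < t by apply: lt_le_trans t1.
  have X := IP T t (lexx T) Tt.
  have P1 : 1 <= t `^ (j.+1%:R) by rewrite powR_mulrn ?exprn_ege1 // ltW.
  have PT0 : 0 <= T `^ (j.+1%:R) := powR_ge0 _ _.
  have PTt : T `^ (j.+1%:R) <= t `^ (j.+1%:R) := powR_mono (ltW T0) Tt (ler0n _ _).
  have A1 : M / j.+1%:R * (t `^ (j.+1%:R) - T `^ (j.+1%:R)) <=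
       `|M / j.+1%:R| * t `^ (j.+1%:R).
    apply: (@le_trans _ _ (`|M / j.+1%:R| * (t `^ (j.+1%:R) - T `^ (j.+1%:R)))).
      apply: ler_wpM2r; [by rewrite subr_ge0 | exact: ler_norm].
    apply: ler_wpM2l => //; lra.
  have A2 : `|F i T| <= `|F i T| * t `^ (j.+1%:R) by rewrite ler_peMr.
  have A3 : `|F i t| <= `|F i T| + `|F i t - F i T|.
    by rewrite -{1}(subrKC (F i T) (F i t)) ler_normD.
  rewrite mulrDl; apply: le_trans A3 _; apply: lerD => //; exact: le_trans X A1.
Qed.

Lemma f_nz : ev (fun t => f t != 0).
Proof.
have [C /evP HC] := hdel.
have [T HT] := ev_and HC (ev_pos R); exists T => t /HT [Ct t0].
apply/eqP => f0; move: Ct; rewrite f0 normr0 mulr0.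
by rewrite gtr0_norm ?powR_gt0 // leNgt powR_gt0.
Qed.

Lemma NotSmall j : (j <= d)%N -> forall B, ~ ev (fun t => `|F j t| <= B).
Proof.
move=> jd B Hb.
have Hb' : ev (fun t => `|F (0 + j) t| <= B) by rewrite add0n.
have [M HM] := chain Hb'.
set M' := Num.max M 1.
have M'1 : 1 <= M' by rewrite le_max lexx orbT.
have M'0 : 0 < M' by apply: lt_le_trans M'1.
set eps := (2 * M')^-1.
have e0 : 0 < eps by rewrite invr_gt0 mulr_gt0.
have S := (smallE _).2 hd1 eps e0.
have [y [[[S1 S2] S3] y1]] := ev_ex (ev_and (ev_and (ev_and S HM) f_nz) (ev_ge 1)).
have y0 : 0 < y by apply: lt_le_trans y1.
rewrite /= in S1 S2.
set A := y ^+ d.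
have A0 : 0 < A by rewrite exprn_gt0.
have Fy0 : 0 < `|f y| by rewrite normr_gt0.
have yj : y `^ (j%:R) <= A.
  rewrite /A -(powR_mulrn _ (ltW y0)); apply: (ler_powR y1); by rewrite ler_nat.
have B1 : `|f y| <= M' * A.
  apply: le_trans S2 _; apply: (@le_trans _ _ (M' * y `^ (j%:R))).
    by apply: ler_wpM2r; [exact: powR_ge0 | rewrite le_max lexx].
  by apply: ler_wpM2l => //; exact: ltW.
have B2 : A <= eps * `|f y|.
  by move: S1; rewrite normrM normfV (gtr0_norm A0) ler_pdivrMr.
have B3 : eps * (M' * A) = A / 2 by rewrite /eps; field; rewrite gt_eqF.
have B4 : eps * `|f y| <= eps * (M' * A) by apply: ler_wpM2l => //; exact: ltW.
lra.
Qed.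

Definition e : R := Num.min delta 1 / 2.

Lemma e_pos : 0 < e.
Proof. by rewrite /e divr_gt0 // lt_min hdel0 ltr01. Qed.

Lemma e_lt1 : e < 1.
Proof.
have : Num.min delta 1 <= 1 by rewrite ge_min lexx orbT.
have : 0 < Num.min delta 1 by rewrite lt_min hdel0 ltr01.
rewrite /e; lra.
Qed.

Lemma e_le_delta : e <= delta.
Proof.
have : Num.min delta 1 <= delta by rewrite ge_min lexx.
have : 0 < Num.min delta 1 by rewrite lt_min hdel0 ltr01.
rewrite /e; lra.
Qed.

Definition P1prop k := exists m, 0 < m /\ ev (fun t => m * t `^ (e - k%:R) <= `|F k t|).

Lemma P1_or_small k : P1prop k \/ small (fun t => F k t / t `^ (e - k%:R)).
Proof.
have Hq : H (fun t => F k t / t `^ (e - k%:R)).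
  exact: (Hdiv hH (HF k) (Hpow hH hLE _) (ev_powR_neq0 _)).
case: (Hdich hH Hq) => [S|[m [m0 L]]]; [by right | left; exists m; split => //].
have L' : ev (fun t => m <= `|F k t / t `^ (e - k%:R)|).
  case: L => -[T HT]; exists T => t /HT Lt.
  - exact: le_trans Lt (ler_norm _).
  - by rewrite -normrN; apply: le_trans (ler_norm _); rewrite lerNr.
have [T HT] := ev_and L' (ev_pos R); exists T => t /HT [Lt t0].
have P0 : 0 < t `^ (e - k%:R) by apply: powR_gt0.
by move: Lt; rewrite normrM normfV (gtr0_norm P0) ler_pdivlMr.
Qed.

Lemma P1_base : P1prop d.+1.
Proof.
case: (P1_or_small d.+1) => // S; exfalso.
case: (posnP d) => [d0|dpos].
-
  have [C /evP HC] := hdel.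
  set C' := Num.max C 1.
  have C'1 : 1 <= C' by rewrite le_max lexx orbT.
  have C'0 : 0 < C' by apply: lt_le_trans C'1.
  have e0 := e_pos.
  set eps := e / (2 * C').
  have eps0 : 0 < eps by rewrite divr_gt0 // mulr_gt0.
  have Sb := S eps eps0.
  have [T HT] := ev_and (ev_and (ev_and Sb (DF 0)) (ev_ge 1)) HC.
  have T1 : 1 <= T := (HT T (lexx T)).1.2.
  have T0 : 0 < T by apply: lt_le_trans T1.
  have Bd : forall t, T <= t -> `|F 1 t| <= eps * t `^ (e - 1).
    move=> t Tt; have [[[St _] t1] _] := HT t Tt.
    have t0 : 0 < t by apply: lt_le_trans t1.
    have P0 : 0 < t `^ (e - 1) by apply: powR_gt0.
    by move: St; rewrite d0 normrM normfV (gtr0_norm P0) ler_pdivrMr.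
  have IP := @int_pow R (F 0) (F 1) e eps T T0 (lt0r_neq0 e0)
     (fun t Tt => (HT t Tt).1.1.2) Bd.
  have [y [[Uy Ty] Hy]] := ev_ex (ev_and (ev_and
     (@powR_unb R delta (2 * C' * `|f T| + 1) hdel0) (ev_ge T)) (ex_intro _ T (fun t Tt => (HT t Tt).2))).
  have y1 : 1 <= y by apply: le_trans Ty.
  have y0 : 0 < y by apply: lt_le_trans y1.
  have X := IP T y (lexx T) Ty; rewrite /= in X.
  have Ye : y `^ e <= y `^ delta by apply: ler_powR => //; exact: e_le_delta.
  have D0 : 0 < y `^ delta by apply: powR_gt0.
  rewrite gtr0_norm // in Hy.
  have PT0 : 0 <= T `^ e := powR_ge0 _ _.
  have A1 : eps / e * (y `^ e - T `^ e) <= eps / e * y `^ e.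
    apply: ler_wpM2l; [by rewrite divr_ge0 // ltW | lra].
  have A2 : `|f y| <= `|f T| + `|f y - f T|.
    by rewrite -{1}(subrKC (f T) (f y)) ler_normD.
  have A3 : C * `|f y| <= C' * `|f y|.
    by apply: ler_wpM2r => //; rewrite le_max lexx.
  have A4 : C' * (eps / e * y `^ e) = y `^ e / 2.
    by rewrite /eps; field; rewrite !gt_eqF.
  have A5 : C' * `|f y| <= C' * (`|f T| + eps / e * y `^ e).
    apply: ler_wpM2l; first exact: ltW.
    apply: le_trans A2 _; apply: lerD => //; exact: le_trans X A1.
  rewrite mulrDr A4 in A5.
  have A6 : 0 <= C' * `|f T| by apply: mulr_ge0; [exact: ltW | exact: normr_ge0].
  suff : (1 : R) <= 0 by rewrite ler10.
  lra.
-
  have [T HT] := ev_and (ev_and (S 1 ltr01) (DF d)) (ev_ge 1).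
  have T1 : 1 <= T := (HT T (lexx T)).2.
  have T0 : 0 < T by apply: lt_le_trans T1.
  set b := e - d%:R.
  have b0 : b < 0.
    have : (1 : R) <= d%:R by rewrite ler1n.
    have := e_lt1; rewrite /b; lra.
  have Bd : forall t, T <= t -> `|F d.+1 t| <= 1 * t `^ (b - 1).
    move=> t Tt; have [[St _] t1] := HT t Tt.
    have t0 : 0 < t by apply: lt_le_trans t1.
    have -> : b - 1 = e - d.+1%:R by rewrite /b -natr1; ring.
    have P0 : 0 < t `^ (e - d.+1%:R) by apply: powR_gt0.
    by move: St; rewrite mul1r normrM normfV (gtr0_norm P0) ler_pdivrMr // mul1r.
  have IP := @int_pow R (F d) (F d.+1) b 1 T T0 (ltr0_neq0 b0)
     (fun t Tt => (HT t Tt).1.2) Bd.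
  apply: (@NotSmall d (leqnn d) (`|F d T| + - (1 / b) * T `^ b)).
  exists T => y Ty.
  have X := IP T y (lexx T) Ty.
  have ib : 1 / b < 0 by rewrite div1r invr_lt0.
  have A1 : 1 / b * y `^ b <= 0 by apply: mulr_le0_ge0; [exact: ltW | exact: powR_ge0].
  have A2 : `|F d y| <= `|F d T| + `|F d y - F d T|.
    by rewrite -{1}(subrKC (F d T) (F d y)) ler_normD.
  rewrite mulrBr in X.
  lra.
Qed.

Lemma P1_step k : (d.+1 <= k)%N -> P1prop k -> P1prop k.+1.
Proof.
move=> dk [m [m0 Pk]].
case: (P1_or_small k.+1) => // S; exfalso.
set b := e - k%:R.
have b0 : b < 0.
  have : (1 : R) <= k%:R by rewrite ler1n (leq_trans _ dk).
  have := e_lt1; rewrite /b; lra.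
set c := - (m / 2) * b.
have c0 : 0 < c by rewrite /c mulNr -mulrN mulr_gt0 // ?oppr_gt0 // divr_gt0.
have [T HT] := ev_and (ev_and (ev_and (S c c0) (DF k)) (ev_ge 1)) Pk.
have T1 : 1 <= T := (HT T (lexx T)).1.2.
have T0 : 0 < T by apply: lt_le_trans T1.
have Bd : forall t, T <= t -> `|F k.+1 t| <= c * t `^ (b - 1).
  move=> t Tt; have [[[St _] t1] _] := HT t Tt.
  have t0 : 0 < t by apply: lt_le_trans t1.
  have -> : b - 1 = e - k.+1%:R by rewrite /b -natr1; ring.
  have P0 : 0 < t `^ (e - k.+1%:R) by apply: powR_gt0.
  by move: St; rewrite normrM normfV (gtr0_norm P0) ler_pdivrMr.
have IP := @int_pow R (F k) (F k.+1) b c T T0 (ltr0_neq0 b0)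
   (fun t Tt => (HT t Tt).1.1.2) Bd.
have PT0 : 0 < T `^ b by apply: powR_gt0.
have q0 : 0 < m / 4 * T `^ b by rewrite mulr_gt0 // divr_gt0.
have [y [Sy Ty]] := ev_ex (ev_and (Fk_small dk q0) (ev_ge T)).
have X := IP T y (lexx T) Ty.
have cb : c / b = - (m / 2) by rewrite /c mulrK // unitfE (ltr0_neq0 b0).
rewrite cb in X.
have Py : 0 <= y `^ b := powR_ge0 _ _.
have HTT := (HT T (lexx T)).2; rewrite /= in HTT.
have A2 : `|F k T| <= `|F k y| + `|F k y - F k T|.
  by rewrite distrC -{1}(subrKC (F k y) (F k T)) ler_normD.
have A3 : - (m / 2) * (y `^ b - T `^ b) <= m / 2 * T `^ b.
  rewrite mulNr mulrBr opprB; have : 0 <= m / 2 * y `^ b.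
    by apply: mulr_ge0 => //; rewrite divr_ge0 // ltW.
  lra.
have A4 : 0 < m * T `^ b by apply: mulr_gt0.
rewrite /b in A3 A4 X Sy.
suff : (1 : R) <= 0 by rewrite ler10.
lra.
Qed.

Lemma P1 k : (d.+1 <= k)%N -> P1prop k.
Proof.
move=> dk; rewrite -(subnKC dk); elim: (k - d.+1)%N => [|i IH].
- by rewrite addn0; exact: P1_base.
- by rewrite addnS; apply: P1_step => //; exact: leq_addr.
Qed.

Lemma LBcore (G dG : R -> R) (k : nat) (m : R) :
  H (fun t => t * dG t / G t) -> ev (fun t => is_derive t 1 G (dG t)) ->
  ev (fun t => 0 < G t) -> small G -> 0 < m ->
  ev (fun t => m * t `^ (e - k%:R) <= G t) -> (0 < k)%N ->
  exists M, 0 <= M /\ ev (fun t => t * `|dG t| <= M * G t).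
Proof.
move=> Hq DG Gpos SG m0 PG k0.
have [[r L]|[P|N]] := Hlim hH Hq.
- exists (`|r| + 1); split; first by rewrite addr_ge0.
  have [T HT] := ev_and (ev_and ((cvgE _ _).1 L 1 ltr01) Gpos) (ev_pos R).
  exists T => t /HT [[Lt G0] t0].
  have Q : `|t * dG t / G t| <= `|r| + 1.
    apply: le_trans (_ : `|r| + `|t * dG t / G t - r| <= _).
      by rewrite -{1}(subrKC r (t * dG t / G t)) ler_normD.
    by rewrite lerD2l.
  by move: Q; rewrite !normrM normfV (gtr0_norm G0) (gtr0_norm t0) ler_pdivrMr.
- exfalso.
  have [T HT] := ev_and (ev_and (ev_and (P 1) DG) Gpos) (ev_pos R).
  have dpos : forall t, T <= t -> 0 <= dG t.
    move=> t /HT [[[Pt _] G0] t0]; move: Pt; rewrite ler_pdivlMr // mul1r => Pt.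
    have : 0 < t * dG t by apply: lt_le_trans Pt.
    by rewrite pmulr_rgt0 // => /ltW.
  have M := ndec_of_der (fun t Tt => (HT t Tt).1.1.2) dpos.
  have GT0 : 0 < G T := (HT T (lexx T)).1.2.
  have h2 : 0 < G T / 2 by rewrite divr_gt0.
  have [y [Sy Ty]] := ev_ex (ev_and (SG (G T / 2) h2) (ev_ge T)).
  have := M T y (lexx T) Ty.
  have Gy : 0 < G y := (HT y Ty).1.2.
  move: Sy; rewrite gtr0_norm //; lra.
- exfalso.
  set Nn : R := k%:R.
  have N0 : 0 < Nn by rewrite ltr0n.
  have [T HT] := ev_and (ev_and (ev_and (ev_and (N (- Nn)) DG) Gpos) (ev_ge 1)) PG.
  have T1 : 1 <= T := (HT T (lexx T)).1.2.
  have T0 : 0 < T by apply: lt_le_trans T1.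
  have DP : forall t, T <= t -> is_derive t 1 (G * (fun s => s `^ Nn))
      (G t *: (Nn * t `^ (Nn - 1)) + t `^ Nn *: dG t).
    move=> t Tt; apply: is_deriveM; first exact: (HT t Tt).1.1.1.2.
    apply: is_derive1_powR; apply: lt_le_trans T0 Tt.
  have D0 : forall t, T <= t -> is_derive t 1 (cst (0 : R)) 0.
    by move=> t _; exact: is_derive_cst.
  have Dle : forall t, T <= t -> G t *: (Nn * t `^ (Nn - 1)) + t `^ Nn *: dG t <= 0.
    move=> t Tt; have [[[[Qt _] G0] t1] _] := HT t Tt.
    have t0 : 0 < t by apply: lt_le_trans t1.
    move: Qt; rewrite ler_pdivrMr // => Qt.
    rewrite -[_ *: _]/(_ * _) -[t `^ Nn *: _]/(_ * _).
    rewrite -(mulr_powRB1 (ltW t0) N0).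
    have P0 : 0 < t `^ (Nn - 1) by apply: powR_gt0.
    have -> : G t * (Nn * t `^ (Nn - 1)) + t * t `^ (Nn - 1) * dG t =
        t `^ (Nn - 1) * (Nn * G t + t * dG t) by ring.
    apply: mulr_ge0_le0; first exact: ltW.
    rewrite mulNr in Qt; lra.
  have C := cmp DP D0 Dle.
  set K := G T * T `^ Nn.
  have [y [[Uy Ty] Py]] := ev_ex (ev_and (ev_and (@powR_unb R e ((`|K| + 1) / m) e_pos)
      (ev_ge T)) (ex_intro _ T (fun t Tt => (HT t Tt).2))).
  have y0 : 0 < y by apply: lt_le_trans T0 Ty.
  have Cy := C T y (lexx T) Ty; rewrite /= subrr in Cy.
  have E : y `^ (e - Nn) * y `^ Nn = y `^ e.
    by rewrite -powRD ?subrK // (gt_eqF y0) implybT.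
  have PyN : m * y `^ (e - Nn) * y `^ Nn <= G y * y `^ Nn.
    by apply: ler_wpM2r => //; exact: powR_ge0.
  rewrite -mulrA E in PyN.
  move: Uy; rewrite ler_pdivrMr // mulrC => Uy.
  have : K <= `|K| := ler_norm _.
  have Cy2 : G y * y `^ Nn - K <= 0 := Cy.
  have KK : K <= `|K| := ler_norm _.
  suff : (1 : R) <= 0 by rewrite ler10.
  lra.
Qed.

Lemma F_nz k : (d.+1 <= k)%N -> ev (fun t => 0 < `|F k t|).
Proof.
move=> dk; have [m [m0 Pk]] := P1 dk.
have [T HT] := ev_and Pk (ev_pos R); exists T => t /HT [Pt t0].
by apply: lt_le_trans Pt; rewrite mulr_gt0 // powR_gt0.
Qed.

Lemma LBound k : (d.+1 <= k)%N ->
  exists M, 0 <= M /\ ev (fun t => t * `|F k.+1 t| <= M * `|F k t|).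
Proof.
move=> dk; have [m [m0 Pk]] := P1 dk.
have k0 : (0 < k)%N by apply: leq_trans dk.
have nz : ev (fun t => F k t != 0).
  by have [T HT] := F_nz dk; exists T => t /HT; rewrite normr_gt0.
have Hq : H (fun t => t * F k.+1 t / F k t).
  exact: (Hdiv hH (Hmul hH (Hid hLE) (HF k.+1)) (HF k) nz).
have S := Fk_small dk.
have [Z|[Pos|Neg]] := Hsign hH (HF k).
- exfalso; have [T HT] := ev_and (ev_and Z Pk) (ev_pos R).
  have [[Zt Pt] t0] := HT T (lexx T); move: Pt; rewrite Zt normr0.
  by rewrite leNgt mulr_gt0 // powR_gt0.
- have Pk' : ev (fun t => m * t `^ (e - k%:R) <= F k t).
    have [T HT] := ev_and Pk Pos; exists T => t /HT [Pt Ft].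
    by rewrite -(gtr0_norm Ft).
  have [M [M0 HM]] := LBcore Hq (DF k) Pos S m0 Pk' k0.
  exists M; split => //; have [T HT] := ev_and HM Pos; exists T => t /HT [Mt Ft].
  by rewrite (gtr0_norm Ft).
- have Hq' : H (fun t => t * (- F k.+1 t) / (- F k t)).
    apply: (Hgerm hH Hq); exists 0 => t _.
    by rewrite mulrN invrN mulrN mulNr opprK.
  have DN : ev (fun t => is_derive t 1 (- F k) (- F k.+1 t)).
    by have [T HT] := DF k; exists T => t /HT Dt; exact: is_deriveN.
  have Pos' : ev (fun t => 0 < (- F k) t).
    by have [T HT] := Neg; exists T => t /HT; rewrite /= oppr_gt0.
  have S' : small (- F k).
    by move=> eps e0; have [T HT] := S eps e0; exists T => t; rewrite /= normrN; exact: HT.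
  have Pk' : ev (fun t => m * t `^ (e - k%:R) <= (- F k) t).
    have [T HT] := ev_and Pk Neg; exists T => t /HT [Pt Ft].
    by have -> : (- F k) t = - F k t by []; rewrite -(ltr0_norm Ft).
  have [M [M0 HM]] := LBcore Hq' DN Pos' S' m0 Pk' k0.
  exists M; split => //; have [T HT] := ev_and HM Neg; exists T => t /HT [Mt Ft].
  by move: Mt; rewrite normrN (ltr0_norm Ft).
Qed.

Lemma lnMp (x y : R) : 0 < x -> 0 < y -> ln (x * y) = ln x + ln y.
Proof. by move=> x0 y0; apply: lnM; rewrite posrE. Qed.

Lemma ler_lnp (x y : R) : 0 < x -> 0 < y -> (ln x <= ln y) = (x <= y).
Proof. by move=> x0 y0; apply: ler_ln; rewrite posrE. Qed.

Lemma P1ln k : (d.+1 <= k)%N ->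
  exists Lm, ev (fun t => Lm + (e - k%:R) * ln t <= ln `|F k t|).
Proof.
move=> dk; have [m [m0 Pk]] := P1 dk.
exists (ln m); have [T HT] := ev_and Pk (ev_pos R); exists T => t /HT [Pt t0].
have P0 : 0 < t `^ (e - k%:R) by apply: powR_gt0.
have M0 : 0 < m * t `^ (e - k%:R) by apply: mulr_gt0.
have A0 : 0 < `|F k t| by apply: lt_le_trans Pt.
by rewrite -ln_powR -lnMp // ler_lnp.
Qed.

Lemma Fle1 k : (d.+1 <= k)%N -> ev (fun t => ln `|F k t| <= 0).
Proof.
move=> dk; have [T HT] := Fk_small dk ltr01.
by exists T => t /HT; exact: ln_le0.
Qed.

Lemma LBln k : (d.+1 <= k)%N ->
  exists LM, ev (fun t => ln t + ln `|F k.+1 t| <= LM + ln `|F k t|).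
Proof.
move=> dk; have [M [M0 HM]] := LBound dk.
have dk1 : (d.+1 <= k.+1)%N by apply: leqW.
have [T HT] := ev_and (ev_and (ev_and HM (F_nz dk)) (F_nz dk1)) (ev_pos R).
have [[[MT AT] BT] T0] := HT T (lexx T).
have Mp : 0 < M.
  rewrite lt_def M0 andbT; apply/eqP => M00; move: MT; rewrite M00 mul0r.
  by rewrite leNgt mulr_gt0.
exists (ln M); exists T => t /HT [[[Mt At] Bt] t0].
by rewrite -!lnMp // ler_lnp // ?mulr_gt0.
Qed.

Lemma P2ln i : exists LC, ev (fun t => ln `|F (d.+1 + i) t| <= LC - i%:R * ln t).
Proof.
elim: i => [|i [LC HC]].
- by exists 0; have [T HT] := Fle1 (leq_addr 0 d.+1); exists T => t /HT; rewrite mul0r subr0.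
- have dk : (d.+1 <= d.+1 + i)%N by apply: leq_addr.
  have [LM HM] := LBln dk.
  exists (LM + LC); have [T HT] := ev_and HM HC; exists T => t /HT [Mt Ct].
  rewrite addnS -natr1; lra.
Qed.

Lemma small_exp (X : R -> R) (g C0 : R) : 0 < g ->
  ev (fun t => X t <= C0 - g * ln t) -> small (fun t => expR (X t)).
Proof.
move=> g0 [T HT] eps e0.
exists (Num.max T (expR ((C0 - ln eps) / g))) => t Tt.
have tT : T <= t by apply: le_trans Tt; rewrite le_max lexx.
have tE : expR ((C0 - ln eps) / g) <= t by apply: le_trans Tt; rewrite le_max lexx orbT.
have t0 : 0 < t by apply: lt_le_trans tE; exact: expR_gt0.
have L1 : (C0 - ln eps) / g <= ln t.
  by rewrite -(ler_lnp (expR_gt0 _) t0) expRK in tE.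
have L2 : C0 - ln eps <= g * ln t by rewrite mulrC -ler_pdivrMr.
have := HT t tT => Xt.
rewrite gtr0_norm ?expR_gt0 // -(lnK (x := eps)) ?posrE // ler_expR; lra.
Qed.

Lemma notsmall_exp (X : R -> R) (C0 : R) :
  ev (fun t => C0 <= X t) -> ~ small (fun t => expR (X t)).
Proof.
move=> [T HT] S.
have h2 : 0 < expR C0 / 2 by rewrite divr_gt0 // expR_gt0.
have [t [St tT]] := ev_ex (ev_and (S _ h2) (ev_ge T)).
move: St; rewrite gtr0_norm ?expR_gt0 // => St.
have : expR C0 <= expR (X t) by rewrite ler_expR; exact: HT.
have := expR_gt0 C0; lra.
Qed.

Definition u k := fun t => `|F k t| `^ (- (k%:R)^-1).

Lemma u_exp k t : 0 < `|F k t| -> u k t = expR (- (k%:R)^-1 * ln `|F k t|).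
Proof. by move=> a0; rewrite /u powR_exp. Qed.

Lemma u_pos k : (d.+1 <= k)%N -> ev (fun t => 0 < u k t).
Proof. by move=> dk; have [T HT] := F_nz dk; exists T => t /HT a0; rewrite u_exp // expR_gt0. Qed.

Lemma Hu k : (d.+1 <= k)%N -> H (u k).
Proof.
move=> dk.
have Hg : H (fun t => (`|F k t|)^-1).
  apply: (Hinv hH (Habs hH (HF k))).
  by have [T HT] := F_nz dk; exists T => t /HT; rewrite lt0r => /andP[].
have gy : (fun t => (`|F k t|)^-1) x @[x --> +oo] --> +oo.
  apply/cvgyE => A.
  have e1 : 0 < (`|A| + 1)^-1 by rewrite invr_gt0 ltr_wpDl.
  have [T HT] := ev_and (Fk_small dk e1) (F_nz dk); exists T => t /HT [St a0].
  apply: (@le_trans _ _ (`|A| + 1)); first by rewrite (le_trans (ler_norm A)) // lerDl.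
  by rewrite -(invrK (`|A| + 1)) lef_pV2 // posrE invr_gt0 ltr_wpDl.
have := hcomp (Hpow hH hLE ((k%:R)^-1)) Hg gy.
move=> Hc; apply: (Hgerm hH Hc).
have [T HT] := F_nz dk; exists T => t /HT a0.
by rewrite /u /= powR_inv_base // -powRN.
Qed.

Lemma ratio_small k : (d.+1 <= k)%N -> small (fun t => u k t / u k.+1 t).
Proof.
move=> dk.
have dk1 : (d.+1 <= k.+1)%N by apply: leqW.
have k0 : (0 < k)%N by apply: leq_trans dk.
have [LM HM] := LBln dk.
have [Lm Hm] := P1ln dk.
set kinv := (k%:R : R)^-1; set r := (k.+1%:R : R)^-1.
have kinv0 : 0 < kinv by rewrite invr_gt0 ltr0n.
have r0 : 0 < r by rewrite invr_gt0 ltr0n.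
have rk : r - kinv <= 0.
  by rewrite subr_le0 lef_pV2 ?posrE ?ltr0n // ler_nat.
set g := e * (kinv * r).
have g0 : 0 < g by rewrite mulr_gt0 ?e_pos // mulr_gt0.
apply: (small_eq (q := fun t => expR (- kinv * ln `|F k t| + r * ln `|F k.+1 t|))).
  apply: (@small_exp _ g (r * LM + (r - kinv) * Lm)) => //.
  have [T HT] := ev_and HM Hm; exists T => t /HT [Mt mt].
  move: Mt mt; set La := ln `|F k t|; set Lb := ln `|F k.+1 t|; set Lt := ln t.
  move=> Mt mt.
  have h1 : r * Lb <= r * (LM + La - Lt) by apply: ler_wpM2l; [exact: ltW | lra].
  have h2 : (r - kinv) * La <= (r - kinv) * (Lm + (e - k%:R) * Lt).
    by apply: ler_wnM2l.
  have iden : (r - kinv) * (Lm + (e - k%:R) * Lt) - r * Lt = (r - kinv) * Lm - g * Lt.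
    rewrite /g /r /kinv; field.
    have h : (0 : R) < 1 + k%:R by have := ler0n R k; lra.
    by rewrite gt_eqF // pnatr_eq0 -lt0n k0.
  lra.
have [T HT] := ev_and (F_nz dk) (F_nz dk1); exists T => t /HT [a0 b0].
by rewrite !u_exp // -expRB /r /kinv; congr expR; ring.
Qed.

Lemma tcu_exp k (c t : R) : 0 < t -> 0 < `|F k t| ->
  t `^ c / u k t = expR (c * ln t + (k%:R)^-1 * ln `|F k t|).
Proof.
by move=> t0 a0; rewrite u_exp // powR_exp // -expRB; congr expR; ring.
Qed.

Lemma A_notsmall k (c : R) : (d.+1 <= k)%N -> 1 - e / k%:R <= c ->
  ~ small (fun t => t `^ c / u k t).
Proof.
move=> dk ck S.
have k0 : (0 < k)%N by apply: leq_trans dk.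
have [Lm Hm] := P1ln dk.
set kinv := (k%:R : R)^-1.
have kinv0 : 0 < kinv by rewrite invr_gt0 ltr0n.
apply: (@notsmall_exp (fun t => c * ln t + kinv * ln `|F k t|) (kinv * Lm)).
  have [T HT] := ev_and (ev_and Hm (ev_ge 1)) (F_nz dk); exists T => t /HT [[mt t1]] a0.
  move: mt; set La := ln `|F k t|; set Lt := ln t => mt.
  have Lt0 : 0 <= Lt by apply: ln_ge0.
  have h : kinv * (Lm + (e - k%:R) * Lt) <= kinv * La by apply: ler_wpM2l => //; exact: ltW.
  have iden : kinv * (Lm + (e - k%:R) * Lt) = kinv * Lm + (kinv * e - 1) * Lt.
    by rewrite /kinv; field; rewrite pnatr_eq0 -lt0n.
  have h3 : 0 <= (c + kinv * e - 1) * Lt.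
    by apply: mulr_ge0 => //; move: ck; rewrite /kinv mulrC; lra.
  lra.
apply: (small_eq S).
have [T HT] := ev_and (F_nz dk) (ev_pos R); exists T => t /HT [a0 t0].
by rewrite tcu_exp.
Qed.

Lemma notA_small i (c : R) : c < i%:R / (d.+1 + i)%:R ->
  small (fun t => t `^ c / u (d.+1 + i) t).
Proof.
move=> ci.
have dk : (d.+1 <= d.+1 + i)%N by apply: leq_addr.
have [LC HC] := P2ln i.
set kinv := ((d.+1 + i)%:R : R)^-1.
have kinv0 : 0 < kinv by rewrite invr_gt0 ltr0n addSn.
set g := i%:R * kinv - c.
have g0 : 0 < g by rewrite /g subr_gt0.
apply: (small_eq (q := fun t => expR (c * ln t + kinv * ln `|F (d.+1 + i) t|))).
  apply: (@small_exp _ g (kinv * LC)) => //.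
  have [T HT] := HC; exists T => t /HT; set La := ln `|F (d.+1 + i) t|; set Lt := ln t => Ct.
  have h : kinv * La <= kinv * (LC - i%:R * Lt) by apply: ler_wpM2l => //; exact: ltW.
  rewrite /g; lra.
have [T HT] := ev_and (F_nz dk) (ev_pos R); exists T => t /HT [a0 t0].
by rewrite tcu_exp.
Qed.

Lemma cvg_toE (p : R -> R) (r : R) :
  p x @[x --> +oo] --> r -> (p x)%:E @[x --> +oo] --> r%:E.
Proof. by move=> L; apply: cvg_EFin; [exact: nearW | exact: L]. Qed.

Lemma part_i : exists K : nat, forall k : nat, (K <= k)%N -> exists g, S_class H f k g.
Proof.
exists d.+1 => k dk; exists (u k); split; first exact: Hu.
split.
- exists 1%E; split => //; apply: cvg_toE; apply/cvgE => eps e0.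
  have [T HT] := u_pos dk; exists T => t /HT u0.
  by rewrite divff ?gt_eqF // normr1 subrr normr0 ltW.
- exact/smallE/ratio_small.
Qed.

Lemma discrete_ivt (P : nat -> Prop) n : P 0%N -> ~ P n ->
  exists j, (j < n)%N /\ P j /\ ~ P j.+1.
Proof.
elim: n => [P0 NP|n IH P0 NP]; first by [].
case: (pselect (P n)) => Pn.
- by exists n; split => //.
- have [j [jn [Pj NPj]]] := IH P0 Pn; exists j; split => //.
  exact: ltnW.
Qed.

Lemma part_ii : exists2 c1 : R, c1 < 1 & forall c : R, c1 < c -> c < 1 -> 0 < c ->
      exists k0 : nat, derive1n k0 f x @[x --> +oo] --> 0 /\
        S_class H f k0 (fun t => t `^ c).
Proof.
have K0 : (0 : R) < d.+1%:R by rewrite ltr0n.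
exists (1 - e / d.+1%:R).
  have h : 0 < e / d.+1%:R by rewrite divr_gt0 // e_pos.
  by rewrite gtrBl.
move=> c c1c c1 c0.
set K : R := d.+1%:R.
have c1' : 0 < 1 - c by rewrite subr_gt0.
set i := Num.Def.archi_bound (K / (1 - c)).
have iB : K / (1 - c) < i%:R by apply: archi_boundP; rewrite divr_ge0 // ltW.
have ci : c < i%:R / (d.+1 + i)%:R.
  have Ki : (0 : R) < (d.+1 + i)%:R by rewrite ltr0n addSn.
  rewrite ltr_pdivlMr // natrD.
  move: iB; rewrite ltr_pdivrMr // => iB.
  have : c * K <= K by rewrite ler_piMl // ?ltW.
  rewrite -/K; lra.
pose A := fun j => ~ small (fun t => t `^ c / u (d.+1 + j) t).
have A0 : A 0%N by rewrite /A addn0; apply: A_notsmall => //; exact: ltW.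
have Ai : ~ A i by rewrite /A => /(_ (notA_small ci)).
have [j [ji [Aj NAj]]] := discrete_ivt A0 Ai.
have dk : (d.+1 <= d.+1 + j)%N by apply: leq_addr.
exists (d.+1 + j)%N; split; first exact/smallE/Fk_small.
split; first exact: Hpow.
split; last first.
  rewrite -addnS; apply/smallE; apply: contrapT; exact: NAj.
have Hq : H (fun t => t `^ c / u (d.+1 + j) t).
  apply: (Hdiv hH (Hpow hH hLE c) (Hu dk)).
  by have [T HT] := u_pos dk; exists T => t /HT /gt_eqF ->.
have qpos : ev (fun t => 0 < t `^ c / u (d.+1 + j) t).
  have [T HT] := ev_and (u_pos dk) (ev_pos R); exists T => t /HT [u0 t0].
  exact: (divr_gt0 (powR_gt0 c t0) u0).
have [[r L]|[P|N]] := Hlim hH Hq.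
- have r0 : r != 0.
    apply/eqP => r0; apply: Aj; apply/smallE. rewrite -r0. exact: L.
  exists (`|r|%:E); split; first by rewrite eqe normr_eq0.
  apply: cvg_toE. apply: cvg_norm. exact: L.
- exists +oo%E; split. by []. apply/cvgeryP. apply/cvgyE => B.
  have [T HT] := P B; exists T => t /HT Bt. exact: (le_trans Bt (ler_norm _)).
- exfalso; have [T HT] := ev_and (N (-1)) qpos.
  have [Nt Pt] := HT T (lexx T).
  have h := lt_le_trans Pt Nt.
  have h2 : (-1 : R) < 0 by rewrite ltrN10.
  by move: h; rewrite ltNge (ltW h2).
Qed.

Lemma part_iii : forall k : nat, derive1n k f x @[x --> +oo] --> 0 ->
     ~ (exists2 c0 : R, c0 < 1 &
          forall c : R, c0 < c -> c < 1 -> S_class H f k (fun t => t `^ c)).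
Proof.
move=> k Lk [c0 c01 Hc].
have Sk : small (F k) by apply/smallE.
have dk : (d.+1 <= k)%N.
  rewrite ltnNge; apply/negP => kd.
  exact: (NotSmall kd (Sk 1 ltr01)).
have dk1 : (d.+1 <= k.+1)%N by apply: leqW.
set m := Num.max c0 (1 - e / k.+1%:R).
have ek : 0 < e / k.+1%:R by rewrite divr_gt0 ?e_pos // ltr0n.
have m0 : c0 <= m by rewrite /m le_max lexx.
have m2 : 1 - e / k.+1%:R <= m by rewrite /m le_max lexx orbT.
have m1 : m < 1 by rewrite /m gt_max c01 /= gtrBl.
set c := (m + 1) / 2.
have cA : c0 < c by rewrite /c; lra.
have cB : c < 1 by rewrite /c; lra.
have [_ [_ Lt]] := Hc c cA cB.
have cC : 1 - e / k.+1%:R <= c by apply: le_trans m2 _; rewrite /c; lra.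
apply: (A_notsmall dk1 cC).
exact/smallE.
Qed.

End P6.

Unset Implicit Arguments.

Theorem lemmaA3 (R : realType) (H : set (R -> R)) (f : R -> R)
  (hH : hardy_field H) (hLE : contains_LE H)
  (hcomp : hardy_closed_comp H) (hinv : hardy_closed_inv H)
  (hf : H f) (hsnp : strongly_nonpoly f)
  (hdelta : exists2 delta : R, 0 < delta & dominates f (fun t => t `^ delta)) :
  (* (i) *)
  (exists K : nat, forall k : nat, (K <= k)%N -> exists g, S_class H f k g)
  /\
  (* (ii) *)
  (exists2 c1 : R, c1 < 1 & forall c : R, c1 < c -> c < 1 -> 0 < c ->
      exists k0 : nat, derive1n k0 f x @[x --> +oo] --> 0 /\
        S_class H f k0 (fun t => t `^ c))
  /\
  (* (iii) *)
  (forall k : nat, derive1n k f x @[x --> +oo] --> 0 ->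
     ~ (exists2 c0 : R, c0 < 1 &
          forall c : R, c0 < c -> c < 1 -> S_class H f k (fun t => t `^ c))).
Proof.
case: hsnp => d [hd1 hd2].
case: hdelta => delta hdel0 hdel.
split; first by eapply part_i; eassumption.
split; first by eapply part_ii; eassumption.
by eapply part_iii; eassumption.
Qed.
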